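(* Let $X$ and $Y$ be topological spaces, $(Z,d)$ a metric space, $f:X\times Y\to Z$ a mapping, and $\mathcal B$ a countable collection of nonempty subsets of $Y$. Suppose that for every $V\in\mathcal B$ the set-valued mapping $F^V:X\ni x\mapsto f_x(V)\in 2^Z$ is lower quasicontinuous. Then there is a residual set $R\subset X$ such that for each $a\in R$: (1) if $f_a$ is continuous at $b\in Y$ and $b$ has a neighborhood base (in $Y$) contained in $\mathcal B$, then $f$ is continuous at $(a,b)$; (2) if $f_a$ is quasicontinuous at $b\in Y$ and some neighborhood $V'$ of $b$ in $Y$ has a pseudobase (as a subspace) contained in $\mathcal B$, then $f$ is quasicontinuous with respect to the variable $x$ at $(a,b)$; (3) if $f_a$ is cliquish at $b\in Y$ and some neighborhood $V'$ of $b$ in $Y$ has a pseudobase (as a subspace) contained in $\mathcal B$, then $f$ is cliquish with respect to the variable $x$ at $(a,b)$.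
   Context: $f_x(y)=f(x,y)$; $2^Z$ is the set of nonempty subsets of $Z$. $F:X\to 2^Z$ is lower quasicontinuous if for each $x_0\in X$, each neighborhood $U$ of $x_0$ and each open $W\subset Z$ with $F(x_0)\cap W\ne\emptyset$, there is an open $O$ with $\emptyset\ne O\subset U$ and $F(x)\cap W\ne\emptyset$ for all $x\in O$. A mapping $g:Y\to Z$ is quasicontinuous at $b$ if for each neighborhood $V$ of $b$ and neighborhood $W$ of $g(b)$ there is an open $O$ with $\emptyset\ne O\subset V$ and $g(O)\subset W$; it is cliquish at $b$ if for each $\varepsilon>0$ and neighborhood $V$ of $b$ there is an open $O$ with $\emptyset\ne O\subset V$ and $\mathrm{diam}(g(O))\le\varepsilon$. $f$ is quasicontinuous with respect to the variable $x$ at $(a,b)$ if for each neighborhood $V$ of $b$ and $\varepsilon>0$ there are a neighborhood $U$ of $a$ and an open $O\subset Y$ with $\emptyset\ne O\subset V$ such that $d(f(a,b),f(x,y))\le\varepsilon$ for all $x\in U$, $y\in O$; $f$ is cliquish with respect to the variable $x$ at $(a,b)$ if for each neighborhood $V$ of $b$ and $\varepsilon>0$ there are a neighborhood $U$ of $a$ and an open $O\subset Y$ with $\emptyset\ne O\subset V$ such that $d(f(a,y),f(x,y'))\le\varepsilon$ for all $x\in U$, $y,y'\in O$. A pseudobase ($\pi$-base) of a space is a collection of nonempty open sets such that every nonempty open set contains a member of it. Residual means containing a countable intersection of dense open sets. *)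

(* Defs.v *)
From Stdlib Require Import Reals.
Open Scope R_scope.

Definition is_topology {X : Type} (op : (X -> Prop) -> Prop) : Prop :=
  op (fun _ => True) /\
  (forall U V, op U -> op V -> op (fun x => U x /\ V x)) /\
  (forall (F : (X -> Prop) -> Prop), (forall U, F U -> op U) ->
     op (fun x => exists U, F U /\ U x)).

Definition is_metric {Z : Type} (d : Z -> Z -> R) : Prop :=
  (forall x y, 0 <= d x y) /\
  (forall x y, d x y = 0 <-> x = y) /\
  (forall x y, d x y = d y x) /\
  (forall x y z, d x z <= d x y + d y z).

Definition metric_open {Z : Type} (d : Z -> Z -> R) (W : Z -> Prop) : Prop :=
  forall z, W z -> exists e, 0 < e /\ forall z', d z z' < e -> W z'.

Definition subset {X : Type} (A B : X -> Prop) : Prop := forall x, A x -> B x.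
Definition nonempty {X : Type} (A : X -> Prop) : Prop := exists x, A x.

Definition nbhd {X : Type} (op : (X -> Prop) -> Prop) (x : X) (N : X -> Prop) : Prop :=
  exists U, op U /\ U x /\ subset U N.

Definition dense {X : Type} (op : (X -> Prop) -> Prop) (D : X -> Prop) : Prop :=
  forall U, op U -> nonempty U -> exists x, U x /\ D x.

Definition residual {X : Type} (op : (X -> Prop) -> Prop) (R0 : X -> Prop) : Prop :=
  exists D : nat -> X -> Prop,
    (forall n, op (D n) /\ dense op (D n)) /\
    (forall x, (forall n, D n x) -> R0 x).

Definition countable_coll {Y : Type} (B : (Y -> Prop) -> Prop) : Prop :=
  exists e : nat -> (Y -> Prop), forall V, B V -> exists n, e n = V.

Definition lower_quasicont {X Z : Type} (opX : (X -> Prop) -> Prop) (d : Z -> Z -> R)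
  (F : X -> Z -> Prop) : Prop :=
  forall x0 U W, nbhd opX x0 U -> metric_open d W -> (exists z, F x0 z /\ W z) ->
    exists O, opX O /\ nonempty O /\ subset O U /\
      forall x, O x -> exists z, F x z /\ W z.

Definition img_section {X Y Z : Type} (f : X -> Y -> Z) (V : Y -> Prop) : X -> Z -> Prop :=
  fun x z => exists y, V y /\ f x y = z.

Definition continuous_at {Y Z : Type} (opY : (Y -> Prop) -> Prop) (d : Z -> Z -> R)
  (g : Y -> Z) (b : Y) : Prop :=
  forall W, metric_open d W -> W (g b) -> exists V, nbhd opY b V /\ forall y, V y -> W (g y).

Definition quasicontinuous_at {Y Z : Type} (opY : (Y -> Prop) -> Prop) (d : Z -> Z -> R)
  (g : Y -> Z) (b : Y) : Prop :=
  forall V W, nbhd opY b V -> nbhd (metric_open d) (g b) W ->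
    exists O, opY O /\ nonempty O /\ subset O V /\ forall y, O y -> W (g y).

Definition cliquish_at {Y Z : Type} (opY : (Y -> Prop) -> Prop) (d : Z -> Z -> R)
  (g : Y -> Z) (b : Y) : Prop :=
  forall eps V, 0 < eps -> nbhd opY b V ->
    exists O, opY O /\ nonempty O /\ subset O V /\
      forall y y', O y -> O y' -> d (g y) (g y') <= eps.

(** Continuity of f : X x Y -> Z at (a,b) for the product topology
    (product neighborhoods U x V form a neighborhood base). *)
Definition joint_continuous_at {X Y Z : Type} (opX : (X -> Prop) -> Prop)
  (opY : (Y -> Prop) -> Prop) (d : Z -> Z -> R) (f : X -> Y -> Z) (a : X) (b : Y) : Prop :=
  forall W, metric_open d W -> W (f a b) ->
    exists U V, nbhd opX a U /\ nbhd opY b V /\ forall x y, U x -> V y -> W (f x y).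

Definition quasicont_wrt_x {X Y Z : Type} (opX : (X -> Prop) -> Prop)
  (opY : (Y -> Prop) -> Prop) (d : Z -> Z -> R) (f : X -> Y -> Z) (a : X) (b : Y) : Prop :=
  forall V eps, nbhd opY b V -> 0 < eps ->
    exists U O, nbhd opX a U /\ opY O /\ nonempty O /\ subset O V /\
      forall x y, U x -> O y -> d (f a b) (f x y) <= eps.

Definition cliquish_wrt_x {X Y Z : Type} (opX : (X -> Prop) -> Prop)
  (opY : (Y -> Prop) -> Prop) (d : Z -> Z -> R) (f : X -> Y -> Z) (a : X) (b : Y) : Prop :=
  forall V eps, nbhd opY b V -> 0 < eps ->
    exists U O, nbhd opX a U /\ opY O /\ nonempty O /\ subset O V /\
      forall x y y', U x -> O y -> O y' -> d (f a y) (f x y') <= eps.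

Definition nbhd_base {Y : Type} (opY : (Y -> Prop) -> Prop) (b : Y)
  (Bb : (Y -> Prop) -> Prop) : Prop :=
  (forall V, Bb V -> nbhd opY b V) /\
  (forall N, nbhd opY b N -> exists V, Bb V /\ subset V N).

Definition subspace_open {Y : Type} (opY : (Y -> Prop) -> Prop) (V' S : Y -> Prop) : Prop :=
  exists O, opY O /\ forall y, S y <-> (V' y /\ O y).

Definition pseudobase_sub {Y : Type} (opY : (Y -> Prop) -> Prop) (V' : Y -> Prop)
  (P : (Y -> Prop) -> Prop) : Prop :=
  (forall S, P S -> nonempty S /\ subspace_open opY V' S) /\
  (forall T, subspace_open opY V' T -> nonempty T -> exists S, P S /\ subset S T).

(* Main.v *)
Require Import Defs.
From Stdlib Require Import Reals Lra Classical Cantor.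
Open Scope R_scope.

Lemma ball_open {Z : Type} (d : Z -> Z -> R) (hd : is_metric d) (c : Z) (r : R) :
  metric_open d (fun w => d c w < r).
Proof.
  destruct hd as [h0 [h1 [h2 h3]]].
  intros w Hw. exists (r - d c w). split; [lra|].
  intros w' Hw'. specialize (h3 c w w'). lra.
Qed.

Lemma dself {Z : Type} (d : Z -> Z -> R) (hd : is_metric d) (c : Z) : d c c = 0.
Proof. destruct hd as [_ [h1 _]]. apply h1. reflexivity. Qed.

Definition spread {X Y Z : Type} (opX : (X -> Prop) -> Prop) (d : Z -> Z -> R)
  (f : X -> Y -> Z) (V : Y -> Prop) (dl : R) (O : X -> Prop) : Prop :=
  exists z1 z2, d z1 z2 > dl /\ forall x, O x ->
    (exists y, V y /\ d z1 (f x y) < dl/4) /\ (exists y, V y /\ d z2 (f x y) < dl/4).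

Definition bndO {X Y Z : Type} (d : Z -> Z -> R)
  (f : X -> Y -> Z) (V : Y -> Prop) (dl : R) (O : X -> Prop) : Prop :=
  exists z, forall x y, O x -> V y -> d z (f x y) <= dl.

Definition Dset {X Y Z : Type} (opX : (X -> Prop) -> Prop) (d : Z -> Z -> R)
  (f : X -> Y -> Z) (B : (Y -> Prop) -> Prop) (V : Y -> Prop) (dl : R) : X -> Prop :=
  fun x => exists O, (opX O /\ (B V -> spread opX d f V dl O \/ bndO d f V dl O)) /\ O x.

Lemma Dset_open {X Y Z : Type} (opX : (X -> Prop) -> Prop) (d : Z -> Z -> R)
  (hX : is_topology opX) (f : X -> Y -> Z) (B : (Y -> Prop) -> Prop) V dl : opX (Dset opX d f B V dl).
Proof.
  destruct hX as [_ [_ hU]]. unfold Dset.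
  apply (hU (fun O => opX O /\ (B V -> spread opX d f V dl O \/ bndO d f V dl O))).
  intros U [HU _]; exact HU.
Qed.

Lemma Dset_dense {X Y Z : Type} (opX : (X -> Prop) -> Prop) (d : Z -> Z -> R)
  (hd : is_metric d) (f : X -> Y -> Z) (B : (Y -> Prop) -> Prop)
  (hBne : forall V, B V -> nonempty V)
  (hlq : forall V, B V -> lower_quasicont opX d (img_section f V)) V dl (hdl : 0 < dl) :
  dense opX (Dset opX d f B V dl).
Proof.
  intros G HG [x0 Gx0].
  destruct (classic (B V)) as [BV|nBV].
  2:{ exists x0. split; auto. exists G. split; auto. split; auto. intro; contradiction. }
  destruct (classic (exists O, opX O /\ nonempty O /\ subset O G /\ spread opX d f V dl O))
    as [[O [HO [[x Ox] [HOG Hs]]]] | Hns].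
  { exists x. split; auto. exists O. split; auto. }
  destruct (hBne V BV) as [y0 Vy0].
  set (z := f x0 y0).
  destruct (hlq V BV x0 G (fun w => d z w < dl/4)) as [O1 [HO1 [[x1 O1x1] [HO1G HO1m]]]].
  - exists G. repeat split; auto. intros u Hu; exact Hu.
  - apply ball_open; auto.
  - exists z. split. exists y0; split; auto. rewrite dself; auto; lra.
  - exists x1. split; auto. exists O1. split; auto. split; auto. intros _. right.
    exists z. intros x y O1x Vy.
    apply Rnot_lt_le. intro Hlt.
    destruct (hlq V BV x O1 (fun w => d (f x y) w < dl/4)) as [O [HO [HOne [HOO1 HOm]]]].
    + exists O1. repeat split; auto. intros u Hu; exact Hu.
    + apply ball_open; auto.
    + exists (f x y). split. exists y; split; auto. rewrite dself; auto; lra.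
    + apply Hns. exists O. split; auto. split; auto. split.
      { intros u Hu. apply HO1G, HOO1, Hu. }
      exists z, (f x y). split; [lra|]. intros u Ou. split.
      * destruct (HO1m u (HOO1 u Ou)) as [w [[y' [Vy' Hy']] Hw]]. subst w. exists y'. auto.
      * destruct (HOm u Ou) as [w [[y' [Vy' Hy']] Hw]]. subst w. exists y'. auto.
Qed.

Lemma Dset_good {X Y Z : Type} (opX : (X -> Prop) -> Prop) (d : Z -> Z -> R)
  (hd : is_metric d) (f : X -> Y -> Z) (B : (Y -> Prop) -> Prop) V dl (hdl : 0 < dl) a :
  B V -> Dset opX d f B V dl a ->
  (forall y1 y2, V y1 -> V y2 -> d (f a y1) (f a y2) <= dl/4) ->
  exists U z, nbhd opX a U /\ forall x y, U x -> V y -> d z (f x y) <= dl.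
Proof.
  intros BV [O [[HO Hg] Oa]] Hp.
  destruct (Hg BV) as [[z1 [z2 [Hz Hs]]] | [z Hz]].
  - exfalso. destruct (Hs a Oa) as [[y1 [V1 H1]] [y2 [V2 H2]]].
    specialize (Hp y1 y2 V1 V2).
    destruct hd as [_ [_ [hs ht]]].
    pose proof (ht z1 (f a y1) z2) as T1. pose proof (ht (f a y1) (f a y2) z2) as T2.
    rewrite (hs (f a y2) z2) in T2. lra.
  - exists O, z. split; auto. exists O. repeat split; auto. intros u Hu; exact Hu.
Qed.

Definition dk (k : nat) : R := / (INR k + 1).

Lemma dk_pos k : 0 < dk k.
Proof. unfold dk. apply Rinv_0_lt_compat. pose proof (pos_INR k). lra. Qed.

Lemma dk_small eps : 0 < eps -> exists k, 3 * dk k < eps.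
Proof.
  intros He. destruct (INR_unbounded (3 / eps)) as [n Hn]. exists n. unfold dk.
  pose proof (pos_INR n).
  assert (3 < eps * (INR n + 1)).
  { assert (3 / eps * eps = 3) by (field; lra). nra. }
  apply (Rmult_lt_reg_r (INR n + 1)); [lra|].
  rewrite Rmult_assoc, Rinv_l by lra. lra.
Qed.


Theorem theorem3p3 (X Y Z : Type)
  (opX : (X -> Prop) -> Prop) (opY : (Y -> Prop) -> Prop) (d : Z -> Z -> R)
  (hX : is_topology opX) (hY : is_topology opY) (hd : is_metric d)
  (f : X -> Y -> Z) (B : (Y -> Prop) -> Prop)
  (hBc : countable_coll B) (hBne : forall V, B V -> nonempty V)
  (hlq : forall V, B V -> lower_quasicont opX d (img_section f V)) :
  exists R0 : X -> Prop, residual opX R0 /\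
    forall a, R0 a ->
      (forall b, continuous_at opY d (f a) b ->
         (exists Bb, (forall V, Bb V -> B V) /\ nbhd_base opY b Bb) ->
         joint_continuous_at opX opY d f a b) /\
      (forall b, quasicontinuous_at opY d (f a) b ->
         (exists V' P, nbhd opY b V' /\ (forall S, P S -> B S) /\ pseudobase_sub opY V' P) ->
         quasicont_wrt_x opX opY d f a b) /\
      (forall b, cliquish_at opY d (f a) b ->
         (exists V' P, nbhd opY b V' /\ (forall S, P S -> B S) /\ pseudobase_sub opY V' P) ->
         cliquish_wrt_x opX opY d f a b).
Proof.
  destruct hBc as [e He].
  set (D := fun n => Dset opX d f B (e (fst (Cantor.of_nat n))) (dk (snd (Cantor.of_nat n)))).
  exists (fun a => forall n, D n a). split.
  { exists D. split; auto. intro n. split.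
    - apply Dset_open; auto.
    - apply Dset_dense; auto. apply dk_pos. }
  intros a Ha.
  assert (GP : forall V k, B V ->
    (forall y1 y2, V y1 -> V y2 -> d (f a y1) (f a y2) <= dk k / 4) ->
    exists U z, nbhd opX a U /\ forall x y, U x -> V y -> d z (f x y) <= dk k).
  { intros V k BV Hp. destruct (He V BV) as [m Hm].
    specialize (Ha (Cantor.to_nat (m, k))). unfold D in Ha.
    rewrite Cantor.cancel_of_to in Ha. simpl in Ha. rewrite Hm in Ha.
    apply Dset_good with B; auto. apply dk_pos. }
  destruct hd as [h0 [h1 [hs ht]]].
  assert (hd : is_metric d) by (repeat split; auto; apply h1).
  assert (dcc : forall c, d c c = 0) by (intro; apply h1; reflexivity).
  assert (NI : forall b V V', nbhd opY b V -> nbhd opY b V' -> nbhd opY b (fun y => V y /\ V' y)).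
  { intros b V V' [G1 [oG1 [G1b G1V]]] [G2 [oG2 [G2b G2V]]].
    destruct hY as [_ [hI _]].
    exists (fun y => G1 y /\ G2 y). split; auto. split; auto.
    intros y [u v]; split; auto. }
  assert (NA : forall (x : X) U, nbhd opX x U -> U x).
  { intros x U [G [_ [Gx GU]]]. apply GU, Gx. }
  assert (NB : forall (y : Y) V, nbhd opY y V -> V y).
  { intros y V [G [_ [Gx GU]]]. apply GU, Gx. }
  assert (PB : forall V' P, (forall S, P S -> B S) -> pseudobase_sub opY V' P ->
    forall O0, opY O0 -> nonempty O0 -> subset O0 V' ->
    exists S Oy, B S /\ opY Oy /\ nonempty Oy /\ (forall y, Oy y <-> S y) /\ subset S O0).
  { intros V' P HPB [HP1 HP2] O0 oO0 neO0 O0s.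
    destruct (HP2 O0) as [S [PS SO0]]; auto.
    { exists O0. split; auto. intro y; split. intro H; split; auto. tauto. }
    destruct (HP1 S PS) as [[s Ss] [OS [oOS HOS]]].
    destruct hY as [_ [hI _]].
    exists S, (fun y => OS y /\ O0 y). split; auto. split; auto. split.
    { exists s. split. apply HOS, Ss. auto. }
    split; auto. intro y; split. intros [u v]. apply HOS. split; auto.
    intro Sy. split. apply HOS, Sy. auto. }
  split; [|split].
  - intros b Hc [Bb [HBb [Hb1 Hb2]]] W oW Wc.
    destruct (oW _ Wc) as [eps [Heps HW]].
    destruct (dk_small eps Heps) as [k Hk]. pose proof (dk_pos k) as Hdk.
    destruct (Hc (fun w => d (f a b) w < dk k / 8)) as [N [HN HNy]].
    { apply ball_open; auto. }
    { rewrite dcc. lra. }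
    destruct (Hb2 N HN) as [V [BbV VN]].
    destruct (GP V k (HBb V BbV)) as [U [z [HU Hz]]].
    { intros y1 y2 V1 V2. pose proof (HNy y1 (VN y1 V1)). pose proof (HNy y2 (VN y2 V2)).
      pose proof (ht (f a y1) (f a b) (f a y2)) as T9. rewrite (hs (f a y1) (f a b)) in T9. lra. }
    exists U, V. split; [exact HU|]. split; [exact (Hb1 V BbV)|]. intros x y Ux Vy. apply HW.
    pose proof (Hz a b (NA a U HU) (NB b V (Hb1 V BbV))) as T1.
    pose proof (Hz x y Ux Vy) as T2. pose proof (ht (f a b) z (f x y)) as T3.
    rewrite (hs (f a b) z) in T3. lra.
  - intros b Hq [V' [P [HV' [HPB HPs]]]] V eps HV Heps.
    destruct (dk_small eps Heps) as [k Hk]. pose proof (dk_pos k) as Hdk.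
    destruct (Hq (fun y => V y /\ V' y) (fun w => d (f a b) w < dk k / 8)) as [O0 [oO0 [neO0 [O0s O0d]]]].
    { apply NI; auto. }
    { exists (fun w => d (f a b) w < dk k / 8). split. apply ball_open; auto.
      split. rewrite dcc; lra. intros u Hu; exact Hu. }
    destruct (PB V' P HPB HPs O0 oO0 neO0) as [S [Oy [BS [oOy [neOy [OyS SO0]]]]]].
    { intros y Hy. apply (O0s y Hy). }
    destruct (GP S k BS) as [U [z [HU Hz]]].
    { intros y1 y2 V1 V2. pose proof (O0d y1 (SO0 y1 V1)). pose proof (O0d y2 (SO0 y2 V2)).
      pose proof (ht (f a y1) (f a b) (f a y2)) as T9. rewrite (hs (f a y1) (f a b)) in T9. lra. }
    exists U, Oy. split; [exact HU|]. split; [exact oOy|]. split; [exact neOy|]. split.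
    { intros y Hy. apply (O0s y (SO0 y (proj1 (OyS y) Hy))). }
    intros x y Ux Oyy.
    destruct neOy as [y0 Oy0].
    pose proof (O0d y0 (SO0 y0 (proj1 (OyS y0) Oy0))) as T1.
    pose proof (Hz a y0 (NA a U HU) (proj1 (OyS y0) Oy0)) as T2.
    pose proof (Hz x y Ux (proj1 (OyS y) Oyy)) as T3.
    pose proof (ht (f a b) (f a y0) z) as T4. pose proof (ht (f a b) z (f x y)) as T5.
    rewrite (hs (f a y0) z) in T4. lra.
  - intros b Hq [V' [P [HV' [HPB HPs]]]] V eps HV Heps.
    destruct (dk_small eps Heps) as [k Hk]. pose proof (dk_pos k) as Hdk.
    destruct (Hq (dk k / 8) (fun y => V y /\ V' y)) as [O0 [oO0 [neO0 [O0s O0d]]]].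
    { lra. }
    { apply NI; auto. }
    destruct (PB V' P HPB HPs O0 oO0 neO0) as [S [Oy [BS [oOy [neOy [OyS SO0]]]]]].
    { intros y Hy. apply (O0s y Hy). }
    destruct (GP S k BS) as [U [z [HU Hz]]].
    { intros y1 y2 V1 V2. pose proof (O0d y1 y2 (SO0 y1 V1) (SO0 y2 V2)). lra. }
    exists U, Oy. split; [exact HU|]. split; [exact oOy|]. split; [exact neOy|]. split.
    { intros y Hy. apply (O0s y (SO0 y (proj1 (OyS y) Hy))). }
    intros x y y' Ux Oyy Oyy'.
    pose proof (Hz a y (NA a U HU) (proj1 (OyS y) Oyy)) as T2.
    pose proof (Hz x y' Ux (proj1 (OyS y') Oyy')) as T3.
    pose proof (ht (f a y) z (f x y')) as T5.
    rewrite (hs (f a y) z) in T5. lra.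
Qed.
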